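(* Let $U$ be an $n\times n$ matrix whose entries are Laurent polynomials in $x$ over $\mathbb{C}$, such that $\det U$ is a nonzero constant (independent of $x$); then $U^{-1}$ also has Laurent polynomial entries. The following are equivalent: (i) there exist $n\times n$ matrices $T(x)$, with entries polynomial in $x$, and $S(x^{-1})$, with entries polynomial in $x^{-1}$, both having nonzero constant determinants, such that $U=T(x)\,S^{-1}(x^{-1})$; (ii) there exist $n$ column vectors $v_1(x),\dots,v_n(x)$ with entries polynomial in $x$, linearly independent over $\mathbb{C}(x)$, each satisfying $\mathrm{PP}_\infty\big(U^{-1}(x)v_i(x)\big)=0$. Moreover, when (ii) holds, taking $T$ to be the matrix with columns $v_1,\dots,v_n$ and $S=U^{-1}T$ gives a decomposition as in (i); and in any decomposition as in (i), the degree in $x$ of the entries of $T$ does not exceed the maximal power of $x$ occurring in the entries of $U$ (so the polynomial solutions $v$ of $\mathrm{PP}_\infty(U^{-1}v)=0$ relevant for (i) can be found by solving a finite linear system).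
   Context: For a Laurent polynomial (or vector/matrix of Laurent polynomials) $f(x)=\sum_k f_k x^k$, $\mathrm{PP}_\infty f$ denotes its principal part at $x=\infty$, namely $\sum_{k>0} f_k x^k$, the part containing strictly positive powers of $x$. *)

(* Defs.v *)
From HB Require Import structures.
From mathcomp Require Import all_boot all_order all_algebra.
Set Implicit Arguments. Unset Strict Implicit. Unset Printing Implicit Defensive.
Import Order.TTheory GRing.Theory Num.Theory.
Local Open Scope ring_scope.

(* Rational functions C(x) over the coefficient field F, realised as the
   fraction field of F[x].  Laurent polynomials, polynomials in x and
   polynomials in x^{-1} are subsets of this field. *)
Notation ratf F := {fraction {poly F}}.

Definition pK {F : numClosedFieldType} (p : {poly F}) : ratf F := tofrac p.

Definition xK {F : numClosedFieldType} : ratf F := pK 'X.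

Definition is_polyX {F : numClosedFieldType} (f : ratf F) : Prop :=
  exists p : {poly F}, f = pK p.

Definition is_polyXinv {F : numClosedFieldType} (f : ratf F) : Prop :=
  exists q : {poly F}, f = (map_poly (fun c : F => pK c%:P) q).[xK^-1].

Definition is_laurent {F : numClosedFieldType} (f : ratf F) : Prop :=
  exists (p : {poly F}) (k : nat), f = pK p / xK ^+ k.

Definition is_nzconst {F : numClosedFieldType} (f : ratf F) : Prop :=
  exists c : F, c != 0 /\ f = pK c%:P.

(* PP_oo f = 0 for a Laurent polynomial f: f contains no strictly positive
   power of x, i.e. f is a polynomial in x^{-1}. *)
Definition PPinf_zero {F : numClosedFieldType} (f : ratf F) : Prop :=
  is_polyXinv f.

Definition powers_le {F : numClosedFieldType} (f : ratf F) (m : int) : Prop :=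
  is_polyXinv (xK ^ (- m) * f).

Definition TS_decomp {F : numClosedFieldType} (n : nat)
    (U T S : 'M[ratf F]_n) : Prop :=
  [/\ forall i j, is_polyX (T i j),
      forall i j, is_polyXinv (S i j),
      is_nzconst (\det T),
      is_nzconst (\det S)
    & U = T *m invmx S].

(* Main.v *)
Require Import Defs.
From HB Require Import structures.
From mathcomp Require Import all_boot all_order all_algebra.
From mathcomp Require Import ring zify.
Import Order.TTheory GRing.Theory Num.Theory.
Local Open Scope ring_scope.

Definition ringP {F : numClosedFieldType} (P : ratf F -> Prop) :=
  [/\ P 0, P 1, (forall x, P x -> P (-x)),
      (forall x y, P x -> P y -> P (x+y)) & (forall x y, P x -> P y -> P (x*y))].

Lemma ringP_exp {F : numClosedFieldType} (P : ratf F -> Prop) x k :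
  ringP P -> P x -> P (x ^+ k).
Proof.
case=> P0 P1 PN PD PM Px; elim: k => [|k IH]; first by rewrite expr0.
by rewrite exprS; apply: (PM).
Qed.

Lemma ringP_det {F : numClosedFieldType} (P : ratf F -> Prop) n (A : 'M[ratf F]_n) :
  ringP P -> (forall i j, P (A i j)) -> P (\det A).
Proof.
move=> RP HA; have [P0 P1 PN PD PM] := RP.
rewrite /determinant; apply: (big_ind P) => //.
move=> s _.
apply: (PM); first exact: (ringP_exp _ _ _ RP (PN _ P1)).
by apply: (big_ind P).
Qed.

Lemma ringP_sum {F : numClosedFieldType} (P : ratf F -> Prop) n (G : 'I_n -> ratf F) :
  ringP P -> (forall i, P (G i)) -> P (\sum_i G i).
Proof. by case=> P0 P1 PN PD PM HG; apply: (big_ind P). Qed.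

Lemma ringP_inv {F : numClosedFieldType} (P : ratf F -> Prop) n (A : 'M[ratf F]_n) :
  ringP P -> (forall i j, P (A i j)) -> P ((\det A)^-1) -> forall i j, P (invmx A i j).
Proof.
move=> RP HA HD i j; have [P0 P1 PN PD PM] := RP.
rewrite /invmx; case: ifP => _; last exact: HA.
rewrite !mxE /adjugate ?mxE /cofactor; apply: (PM) => //.
apply: (PM); first exact: (ringP_exp _ _ _ RP (PN _ P1)).
by apply: (@ringP_det _ P _ _ RP) => a b; rewrite !mxE.
Qed.

Lemma xK_neq0 {F : numClosedFieldType} : (xK : ratf F) != 0.
Proof. by rewrite /xK /pK tofrac_eq0 polyX_eq0. Qed.


Lemma fadd (K : fieldType) (a b y : K) k l : y != 0 ->
  a / y ^+ k + b / y ^+ l = (a * y ^+ l + b * y ^+ k) / y ^+ (k + l).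
Proof. move=> y0; rewrite exprD; field; by rewrite ?expf_neq0. Qed.

Lemma fmul (K : fieldType) (a b y : K) k l : y != 0 ->
  a / y ^+ k * (b / y ^+ l) = (a * b) / y ^+ (k + l).
Proof. move=> y0; rewrite exprD; field; by rewrite ?expf_neq0. Qed.

Lemma laurent_ring {F : numClosedFieldType} : ringP (@is_laurent F).
Proof.
have xn := @xK_neq0 F.
split.
- by exists 0, 0%N; rewrite /pK tofrac0 mul0r.
- by exists 1, 0%N; rewrite /pK tofrac1 expr0 divr1.
- by move=> x [p [k ->]]; exists (-p), k; rewrite /pK tofracN mulNr.
- move=> x y [p [k ->]] [q [l ->]]; exists (p * 'X^l + q * 'X^k), (k + l)%N.
  by rewrite fadd // /pK tofracD !tofracM !tofracXn.
- move=> x y [p [k ->]] [q [l ->]]; exists (p * q), (k + l)%N.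
  by rewrite fmul // /pK !tofracM.
Qed.

Definition evi {F : numClosedFieldType} (q : {poly F}) : ratf F :=
  (map_poly ((@tofrac {poly F}) \o polyC) q).[xK^-1].

Lemma polyXinvE {F : numClosedFieldType} (f : ratf F) :
  is_polyXinv f <-> exists q, f = evi q.
Proof. by []. Qed.

Lemma polyX_ring {F : numClosedFieldType} : ringP (@is_polyX F).
Proof.
split.
- by exists 0; rewrite /pK tofrac0.
- by exists 1; rewrite /pK tofrac1.
- by move=> x [p ->]; exists (-p); rewrite /pK tofracN.
- by move=> x y [p ->] [q ->]; exists (p + q); rewrite /pK tofracD.
- by move=> x y [p ->] [q ->]; exists (p * q); rewrite /pK tofracM.
Qed.

Lemma polyXinv_ring {F : numClosedFieldType} : ringP (@is_polyXinv F).
Proof.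
split.
- by exists 0; rewrite -/(evi 0) /evi rmorph0 horner0.
- by exists 1; rewrite -/(evi 1) /evi rmorph1 hornerC.
- by move=> x [p ->]; exists (-p); rewrite -!/(evi _) /evi rmorphN hornerN.
- by move=> x y [p ->] [q ->]; exists (p + q); rewrite -!/(evi _) /evi rmorphD hornerD.
- by move=> x y [p ->] [q ->]; exists (p * q); rewrite -!/(evi _) /evi rmorphM hornerM.
Qed.

Lemma const_polyXinv {F : numClosedFieldType} (c : F) : is_polyXinv (pK c%:P).
Proof. by exists c%:P; rewrite -/(evi _) /evi map_polyC hornerC. Qed.

Lemma const_laurent {F : numClosedFieldType} (c : F) : is_laurent (pK c%:P).
Proof. by exists c%:P, 0%N; rewrite expr0 divr1. Qed.

Lemma pKV {F : numClosedFieldType} (c : F) : c != 0 -> (pK c%:P)^-1 = pK (c^-1)%:P.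
Proof.
move=> c0; have h : pK c%:P != 0 :> ratf F by rewrite /pK tofrac_eq0 polyC_eq0.
apply: (mulfI h); rewrite mulfV // /pK -tofracM -polyCM mulfV // tofrac1 //.
Qed.

Lemma evi_mulX {F : numClosedFieldType} (q : {poly F}) :
  exists r d, evi q * xK ^+ d = pK r /\ forall k, (d < k)%N -> r`_k = 0.
Proof.
elim/poly_ind: q => [|q c [r [d [Hr Hk]]]].
  by exists 0, 0%N; rewrite /evi rmorph0 horner0 mul0r /pK tofrac0; split => // k; rewrite coef0.
exists (r + c%:P * 'X^(d.+1)), d.+1; split.
  rewrite /evi rmorphD rmorphM /= map_polyX map_polyC hornerD hornerM hornerX hornerC.
  rewrite -/(evi q) /pK tofracD tofracM tofracXn -/(pK 'X) -/xK /=.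
  rewrite mulrDl exprSr mulrA (mulrAC _ (xK ^+ d)) divfK ?xK_neq0 // Hr.
 done.
move=> k kd; rewrite coefD coefMXn Hk ?(ltn_trans _ kd) //.
rewrite ltnNge (ltnW kd) /= coefC add0r; case: (k - d.+1)%N (subn_gt0 d.+1 k) => //.
by rewrite kd.
Qed.

Lemma deg_bound2 {F : numClosedFieldType} (t r : {poly F}) (a d e : nat) :
  (d <= e)%N -> t * 'X^e = r * 'X^a -> (forall k, (d < k)%N -> r`_k = 0) ->
  forall k, (a < k)%N -> t`_k = 0.
Proof.
move=> de E Hr k ak; have := congr1 (fun p : {poly F} => p`_(k + e)) E.
rewrite /= !coefMXn ltnNge leq_addl /= addnK.
have -> : (k + e < a)%N = false by lia.
move=> ->; apply: Hr; lia.
Qed.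

Lemma deg_bound {F : numClosedFieldType} (t r : {poly F}) (a d : nat) :
  t * 'X^d = r * 'X^a -> (forall k, (d < k)%N -> r`_k = 0) ->
  forall k, (a < k)%N -> t`_k = 0.
Proof. exact: deg_bound2 (leqnn d). Qed.

Lemma pK_inj {F : numClosedFieldType} (p q : {poly F}) : pK p = pK q -> p = q.
Proof. by move=> E; apply/eqP; rewrite -tofrac_eq; apply/eqP. Qed.

Lemma polyX_polyXinv_const {F : numClosedFieldType} (f : ratf F) :
  is_polyX f -> is_polyXinv f -> exists c, f = pK c%:P.
Proof.
move=> [p ->] [q Hq0]; have Hq : pK p = evi q := Hq0.
have [r [d [Hr Hk]]] := evi_mulX q.
exists p`_0; congr pK.
have E : p * 'X^d = r * 'X^0.
  by apply: pK_inj; rewrite expr0 mulr1 -Hr -Hq /pK tofracM tofracXn.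
apply/polyP => k; rewrite coefC; case: k => [|k] //=.
exact: (@deg_bound F p r 0%N d E Hk k.+1 (ltn0Sn k)).
Qed.

Lemma powers_bound {F : numClosedFieldType} (t : {poly F}) (m : int) :
  powers_le (pK t) m -> forall k : nat, m < k%:Z -> t`_k = 0.
Proof.
move=> [q Hq0]; have Hq : xK ^ (- m) * pK t = evi q := Hq0.
have [r [d [Hr Hk]]] := evi_mulX q.
rewrite -Hq in Hr; clear Hq Hq0.
case: m Hr => a Hr k.
- rewrite ltz_nat => ak; apply: (@deg_bound F t r a d _ Hk k ak); apply: pK_inj.
  rewrite -exprnN in Hr.
  rewrite /pK !tofracM !tofracXn -/(pK 'X) -/xK -/(pK t) -/(pK r) -Hr.
  by rewrite (mulrAC _ (xK ^+ d)) (mulrC (xK ^- a)) divfK // expf_neq0 // xK_neq0.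
- move=> _; have E : t * 'X^(a.+1 + d) = r.
    apply: pK_inj; rewrite -Hr NegzE opprK -exprnP.
    by rewrite /pK tofracM tofracXn -/(pK 'X) -/xK exprD mulrA (mulrC (pK t)).
  have := congr1 (fun p : {poly F} => p`_(k + (a.+1 + d))) E.
  rewrite /= coefMXn ltnNge leq_addl /= addnK => ->; apply: Hk; lia.
Qed.

Lemma nzconst_unit {F : numClosedFieldType} n (A : 'M[ratf F]_n) :
  is_nzconst (\det A) -> A \in unitmx.
Proof.
move=> [c [c0 E]]; rewrite unitmxE unitfE E /pK tofrac_eq0 polyC_eq0 //.
Qed.

Lemma dec_of_V {F : numClosedFieldType} n (U V : 'M[ratf F]_n) :
  is_nzconst (\det U) ->
  (forall i j, is_polyX (V i j)) -> row_free V^T ->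
  (forall i j, PPinf_zero ((invmx U *m V) i j)) ->
  TS_decomp U V (invmx U *m V).
Proof.
move=> HdU HV rV HS; have uU := @nzconst_unit F n U HdU.
have [c [c0 Ec]] := HdU.
have uV : V \in unitmx by rewrite -unitmx_tr -row_free_unit.
have uS : invmx U *m V \in unitmx by rewrite unitmx_mul unitmx_inv uU.
have dV : \det V = \det U * \det (invmx U *m V).
  have dU0 : \det U != 0 by move: uU; rewrite unitmxE unitfE.
  by rewrite det_mulmx det_inv mulrA mulfV // mul1r.
have [c' Ec'] : exists c', \det V = pK c'%:P.
  apply: polyX_polyXinv_const; first exact: (@ringP_det F _ n V polyX_ring HV).
  rewrite dV Ec; have [_ _ _ _ PM] := @polyXinv_ring F.
  apply: PM; first exact: const_polyXinv.
  exact: (@ringP_det F _ n _ polyXinv_ring HS).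
have c'0 : c' != 0.
  apply/eqP => c'0; move: uV; rewrite unitmxE unitfE Ec' c'0 /pK tofrac0 eqxx //.
split => //.
- by exists c'.
- exists (c^-1 * c'); split; first by rewrite mulf_neq0 ?invr_eq0.
  by rewrite det_mulmx det_inv Ec Ec' pKV // /pK -tofracM -polyCM.
- by rewrite -{1}(mulKVmx uU V) -mulmxA mulmxV // mulmx1.
Qed.

Lemma T_eq {F : numClosedFieldType} n (U T S : 'M[ratf F]_n) :
  TS_decomp U T S -> T = U *m S.
Proof.
move=> [_ _ _ HS ->]; have uS := @nzconst_unit F n S HS.
by rewrite mulmxKV.
Qed.

Theorem mainTheorem4 (F : numClosedFieldType) (n : nat) (U : 'M[ratf F]_n)
  (HU : forall i j, is_laurent (U i j))
  (Hdet : is_nzconst (\det U)) :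
  (forall i j, is_laurent (invmx U i j)) /\
  ((exists T S : 'M[ratf F]_n, TS_decomp U T S) <->
   (exists V : 'M[ratf F]_n,
      [/\ forall i j, is_polyX (V i j),
          row_free V^T
        & forall i j, PPinf_zero ((invmx U *m V) i j)])) /\
  (forall V : 'M[ratf F]_n,
      (forall i j, is_polyX (V i j)) -> row_free V^T ->
      (forall i j, PPinf_zero ((invmx U *m V) i j)) ->
      TS_decomp U V (invmx U *m V)) /\
  (forall T S : 'M[ratf F]_n, TS_decomp U T S ->
     forall m : int, (forall i j, powers_le (U i j) m) ->
     forall i j (t : {poly F}), T i j = pK t ->
       forall k : nat, m < k%:Z -> t`_k = 0).
Proof.
have uU := @nzconst_unit F n U Hdet.
have [c [c0 Ec]] := Hdet.
split.
  apply: (@ringP_inv F _ n U laurent_ring HU).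
  by rewrite Ec pKV //; apply: const_laurent.
split.
  split.
    move=> [T [S HTS]]; exists T.
    have TE := @T_eq F n U T S HTS.
    have [HT HS dT dS _] := HTS.
    split => //.
      by rewrite row_free_unit unitmx_tr; apply: nzconst_unit.
    by move=> i j; rewrite TE mulKmx //; apply: HS.
  move=> [V [HV rV HS]]; exists V, (invmx U *m V); exact: dec_of_V.
split.
  by move=> V HV rV HS; apply: dec_of_V.
move=> T S HTS m Hm i j t Ht k mk.
apply: (@powers_bound F t m _ k mk).
have [_ HS _ _ _] := HTS.
rewrite -Ht (@T_eq F n U T S HTS) mxE /powers_le mulr_sumr.
have [_ _ _ _ PM] := @polyXinv_ring F.
apply: (@ringP_sum F _ n _ polyXinv_ring) => l.
by rewrite mulrA; apply: PM; [apply: Hm | apply: HS].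
Qed.
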